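(* Let $G$ be a discrete group, $\mathfrak g$ a finite string of elements of $G$, $\mathcal E$ a finite partition of $G$, and $\ell=|Con(\mathfrak g,\mathcal E)|$. Suppose $(B-A)X=0$ is a normal subsystem of $Eq(\mathfrak g,\mathcal E)$ consisting of $p$ equations (so $A,B$ are $p\times\ell$ $(0,1)$-matrices with rows $A_t,B_t$), and suppose that $\sum_{t=1}^p(B_t-A_t)=(1,1,\dots,1)$, i.e. $\alpha_C=1$ for every configuration $C$, where $(\alpha_C)_{C}=\sum_t(B_t-A_t)$. Then the Tarski number satisfies $\tau(G)\le(\ell-1)(2^p-1)$.
   Context: Configurations: for $\mathfrak g=(g_1,\dots,g_n)$ and a partition $\mathcal E=\{E_1,\dots,E_m\}$ of $G$, a configuration is $C=(c_0,\dots,c_n)\in\{1,\dots,m\}^{n+1}$ such that some $x\in G$ has $x\in E_{c_0}$ and $g_ix\in E_{c_i}$ ($1\le i\le n$); $Con(\mathfrak g,\mathcal E)$ is the set of configurations. The configuration equations $Eq(\mathfrak g,\mathcal E)$: variables $f_C$, equations $\sum_{C:\,c_j=i}f_C=\sum_{C:\,c_k=i}f_C$ for $1\le i\le m$, $0\le j,k\le n$, each written $aX=bX$ with $a,b\in\{0,1\}^\ell$ indicator vectors. A subsystem is a finite list (repetitions allowed, sides may be interchanged) of these equations $A_tX=B_tX$, written $(B-A)X=0$. Normality: with $\sum_t(B_t-A_t)$ strictly positive, $T$ the $p\times p$ lower triangular all-ones matrix, and for a permutation matrix $P$ with rows $P_1,\dots,P_p$, $P^+$ the matrix with rows $P_2,\dots,P_p,P_1$,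 the system is normal if for some permutation matrix $P$ all entries of $TP(B-A)-P^+A$ are integers $\ge-1$. Tarski number: a complete paradoxical decomposition of $G$ is a partition $\{A_1,\dots,A_r,B_1,\dots,B_s\}$ of $G$ together with $a_i,b_j\in G$ such that $\{a_iA_i\}_{i=1}^r$ and $\{b_jB_j\}_{j=1}^s$ are each partitions of $G$; $\tau(G)$ is the minimum of $r+s$ over all such decompositions ($\infty$ if none exists). *)

(* Defs.v *)
From HB Require Import structures.
From mathcomp Require Import all_boot all_order all_algebra all_fingroup.
Set Implicit Arguments. Unset Strict Implicit. Unset Printing Implicit Defensive.
Import GRing.Theory Num.Theory.

Record dgroup := DGroup {
  gcar :> Type;
  gmul : gcar -> gcar -> gcar;
  gone : gcar;
  ginv : gcar -> gcar;
  gmulA : forall x y z, gmul x (gmul y z) = gmul (gmul x y) z;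
  gmul1 : forall x, gmul gone x = x;
  gmulV : forall x, gmul (ginv x) x = gone }.

(* A candidate configuration (c_0,...,c_n) with values in {1..m}, encoded
   with 0-based indices: c_0 is C ord0, c_i is C (lift ord0 (i-1)). *)
Definition config (n m : nat) := {ffun 'I_n.+1 -> 'I_m}.

(* g = (g_1..g_n) encoded as g : 'I_n -> G (g (i-1) = g_i);
   the partition E_1..E_m encoded by E : G -> 'I_m (x \in E_{E x}). *)
Definition is_config (G : dgroup) (n m : nat) (g : 'I_n -> G) (E : G -> 'I_m)
    (C : config n m) : Prop :=
  exists x : G, C ord0 = E x /\
    forall i : 'I_n, C (lift ord0 i) = E (gmul (g i) x).

(* cs is a duplicate-free enumeration of exactly the configurations;
   its order fixes the order of the variables f_C (columns). *)
Definition enumerates (T : eqType) (P : T -> Prop) (cs : seq T) : Prop :=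
  uniq cs /\ forall C, C \in cs <-> P C.

(* Subsystem of p equations, equation t given by e t = (i, j, k), meaning
   sum_{C : c_j = i} f_C = sum_{C : c_k = i} f_C ; A_t is the left side. *)
Definition lhs_mx (n m p : nat) (cs : seq (config n m))
    (e : 'I_p -> 'I_m * 'I_n.+1 * 'I_n.+1) : 'M[int]_(p, size cs) :=
  \matrix_(t < p, c < size cs)
     (Posz ((tnth (in_tuple cs) c) (e t).1.2 == (e t).1.1 : nat))%R.

Definition rhs_mx (n m p : nat) (cs : seq (config n m))
    (e : 'I_p -> 'I_m * 'I_n.+1 * 'I_n.+1) : 'M[int]_(p, size cs) :=
  \matrix_(t < p, c < size cs)
     (Posz ((tnth (in_tuple cs) c) (e t).2 == (e t).1.1 : nat))%R.

Definition lowtri (p : nat) : 'M[int]_p := \matrix_(i < p, j < p) Posz ((j <= i)%N : nat).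

Definition perm_plus (p : nat) (s : 'S_p) : 'M[int]_p :=
  \matrix_(t < p, c < p) (perm_mx s : 'M[int]_p) (ordS t) c.

Definition normal_system (p l : nat) (A B : 'M[int]_(p, l)) : Prop :=
  (forall c : 'I_l, (0 < \sum_(t < p) (B t c - A t c))%R) /\
  exists s : 'S_p, forall (t : 'I_p) (c : 'I_l),
    (-1 <= (lowtri p *m perm_mx s *m (B - A) - perm_plus s *m A) t c)%R.

(* There is a complete paradoxical decomposition with r + s <= N,
   i.e. tau(G) <= N.  lab x = inl i means x \in A_i, inr j means x \in B_j. *)
Definition tarski_le (G : dgroup) (N : nat) : Prop :=
  exists (r s : nat) (lab : G -> 'I_r + 'I_s) (a : 'I_r -> G) (b : 'I_s -> G),
    (forall y : G, exists! i : 'I_r, exists x, lab x = inl i /\ gmul (a i) x = y) /\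
    (forall y : G, exists! j : 'I_s, exists x, lab x = inr j /\ gmul (b j) x = y) /\
    (r + s <= N)%N.

(* Main.v *)
Require Import Defs.
From HB Require Import structures.
From mathcomp Require Import all_boot all_order all_algebra all_fingroup.
Import GRing.Theory Num.Theory.
From mathcomp Require Import zify.
From Stdlib Require Import ClassicalEpsilon.
Set Implicit Arguments. Unset Strict Implicit. Unset Printing Implicit Defensive.

Lemma gmulVr (G : dgroup) (x : G) : gmul x (ginv x) = gone G.
Proof.
set y := ginv x.
have -> : gmul x y = gmul (gmul (ginv y) y) (gmul x y) by rewrite gmulV gmul1.
rewrite -gmulA (gmulA y x y) gmulV gmul1 gmulV //.
Qed.

Lemma gmulr1 (G : dgroup) (x : G) : gmul x (gone G) = x.
Proof. by rewrite -(gmulV x) gmulA gmulVr gmul1. Qed.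

Lemma gKl (G : dgroup) (w y : G) : gmul (ginv w) (gmul w y) = y.
Proof. by rewrite gmulA gmulV gmul1. Qed.

Lemma gKr (G : dgroup) (w y : G) : gmul w (gmul (ginv w) y) = y.
Proof. by rewrite gmulA gmulVr gmul1. Qed.

Lemma ginj (G : dgroup) (w y z : G) : gmul w y = gmul w z -> y = z.
Proof. by move=> h; rewrite -(gKl w y) h gKl. Qed.

Lemma tarski_le_mono (G : dgroup) N M : (N <= M)%N -> tarski_le G N -> tarski_le G M.
Proof.
move=> hNM [r [s [lab [a [b [h1 [h2 h3]]]]]]].
exists r, s, lab, a, b; split=> //; split=> //; exact: leq_trans h3 hNM.
Qed.

Definition mass (G : dgroup) (A B : nat -> G -> bool) (k : nat) (y : G) : int :=
  (1 + \sum_(0 <= k' < k) (Posz (B k' y : nat) - Posz (A k' y : nat)))%R.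

Fixpoint Wd (G : dgroup) (p : nat) (w : nat -> G) (k : nat) (S : {set 'I_p.+1}) : G :=
  match k with
  | 0 => gone G
  | k'.+1 => if inord k' \in S then gmul (w k') (Wd w k' S) else Wd w k' S
  end.

Fixpoint Ls (G : dgroup) (p : nat) (A B : nat -> G -> bool) (w : nat -> G) (k : nat)
   : G -> seq {set 'I_p.+1} :=
  match k with
  | 0 => fun _ => [:: set0]
  | k'.+1 => fun y =>
     (if B k' y then [:: inord k' |: head set0 (Ls p A B w k' (gmul (ginv (w k')) y))] else [::])
     ++ (if A k' y then behead (Ls p A B w k' y) else Ls p A B w k' y)
  end.

Lemma massS (G : dgroup) (A B : nat -> G -> bool) k y :
  mass A B k.+1 y = (mass A B k y + Posz (B k y : nat) - Posz (A k y : nat))%R.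
Proof. by rewrite /mass big_nat_recr //= !addrA. Qed.

Lemma L_size (G : dgroup) p (A B : nat -> G -> bool) (w : nat -> G)
  (Hm1 : forall k, k <= p -> forall y, A k y -> (1 <= mass A B k y)%R) :
  forall k, k <= p.+1 -> forall y, Posz (size (Ls p A B w k y)) = mass A B k y.
Proof.
elim=> [|k IH] hk y; first by rewrite /mass big_geq.
have hk' : k <= p by [].
rewrite massS -IH ?(ltnW hk) //= size_cat.
have := Hm1 k hk' y.
case: (A k y); case: (B k y) => /=; rewrite ?size_behead; try (move=> _; lia).
- move=> /(_ isT); rewrite -IH ?(ltnW hk) //; lia.
- move=> /(_ isT); rewrite -IH ?(ltnW hk) //; lia.
Qed.

Lemma L_fresh (G : dgroup) p (A B : nat -> G -> bool) (w : nat -> G) :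
  forall k y S, S \in Ls p A B w k y -> forall j : 'I_p.+1, k <= j -> j \notin S.
Proof.
elim=> [|k IH] y S /=; first by rewrite inE => /eqP -> j _; rewrite inE.
have hhead : forall z, forall j : 'I_p.+1, k <= j -> j \notin head set0 (Ls p A B w k z).
  move=> z j hj; case E: (Ls p A B w k z) => [|h t] /=; first by rewrite inE.
  by apply: (IH z) => //; rewrite E inE eqxx.
rewrite mem_cat => /orP [].
  case: (B k y) => //; rewrite inE => /eqP -> j hj.
  have hkp : k < p.+1 by exact: ltn_trans hj (ltn_ord j).
  rewrite in_setU1 negb_or; apply/andP; split.
    by apply/eqP=> hjk; move: hj; rewrite hjk inordK // ltnn.
  by apply: hhead; apply: ltnW.
move=> hS j hj; apply: (IH y) => //; last exact: ltnW.
by case: (A k y) hS => //; case: (Ls p A B w k y) => //= h t hS; rewrite inE hS orbT.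
Qed.

Lemma Wd_ext (G : dgroup) p (w : nat -> G) k (S T : {set 'I_p.+1}) :
  (forall j, j < k -> (inord j \in S) = (inord j \in T)) -> Wd w k S = Wd w k T.
Proof.
elim: k => [|k IH] h //=.
rewrite h // IH // => j hj; apply: h; exact: ltnW.
Qed.

Lemma Wd_move (G : dgroup) p (w : nat -> G) k (S : {set 'I_p.+1}) :
  k <= p -> Wd w k.+1 (inord k |: S) = gmul (w k) (Wd w k S).
Proof.
move=> hk /=; rewrite in_setU1 eqxx /=; congr gmul; apply: Wd_ext => j hj.
rewrite in_setU1; case: eqP => // /(congr1 val) /=.
rewrite !inordK //; last by apply: leq_trans hj _; apply: ltnW.
by move=> e; move: hj; rewrite e ltnn.
Qed.

Lemma Wd_stay (G : dgroup) p (w : nat -> G) k (S : {set 'I_p.+1}) :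
  inord k \notin S -> Wd w k.+1 S = Wd w k S.
Proof. by move=> h /=; rewrite (negbTE h). Qed.

Lemma step_size (G : dgroup) p (A B : nat -> G -> bool) (w : nat -> G) k y :
  size (Ls p A B w k.+1 y) = B k y + (size (Ls p A B w k y) - A k y).
Proof. by rewrite /= size_cat; case: (B k y); case: (A k y); rewrite ?size_behead ?subn1 ?subn0. Qed.

Lemma step_nth_move (G : dgroup) p (A B : nat -> G -> bool) (w : nat -> G) k y :
  B k y -> nth set0 (Ls p A B w k.+1 y) 0 =
           inord k |: nth set0 (Ls p A B w k (gmul (ginv (w k)) y)) 0.
Proof. by move=> /= ->; rewrite nth0. Qed.

Lemma step_nth_stay (G : dgroup) p (A B : nat -> G -> bool) (w : nat -> G) k y j :
  nth set0 (Ls p A B w k.+1 y) (B k y + j) = nth set0 (Ls p A B w k y) (j + A k y).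
Proof.
rewrite /= nth_cat; case: (B k y) => /=; rewrite ?addn0 ?add1n ?subSS ?subn0 /=;
case: (A k y); rewrite ?addn0 ?addn1 ?nth_behead //.
Qed.



Lemma L_back (G : dgroup) p (A B : nat -> G -> bool) (w : nat -> G)
  (HBA : forall k y, B k y -> A k (gmul (ginv (w k)) y))
  (Hm1 : forall k, k <= p -> forall y, A k y -> (1 <= mass A B k y)%R)
  k (hk : k <= p) x y' i' :
  i' < size (Ls p A B w k.+1 y') ->
  y' = gmul (Wd w k.+1 (nth set0 (Ls p A B w k.+1 y') i')) x ->
  if B k y' && (i' == 0) then
    let z := gmul (ginv (w k)) y' in
    0 < size (Ls p A B w k z) /\ z = gmul (Wd w k (nth set0 (Ls p A B w k z) 0)) x
  else
    B k y' <= i' /\ i' - B k y' + A k y' < size (Ls p A B w k y') /\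
    y' = gmul (Wd w k (nth set0 (Ls p A B w k y') (i' - B k y' + A k y'))) x.
Proof.
move=> hi hy.
have hsz : forall z, A k z -> 0 < size (Ls p A B w k z).
  move=> z hz; have := Hm1 k hk z hz.
  have hkp : k <= p.+1 by exact: leq_trans hk (leqnSn p).
  rewrite -(@L_size G p A B w Hm1 k hkp).
  by rewrite lez_nat.
case hB: (B k y' && (i' == 0)).
  move/andP: hB => [hB /eqP i0]; subst i'.
  rewrite /=; split; first exact/hsz/HBA.
  move: hy; rewrite step_nth_move // Wd_move // -gmulA => hy; by rewrite {1}hy gKl.
have hBi : B k y' <= i' by move: hB; case: (B k y') => //=; case: i' {hi hy}.
have e : i' = B k y' + (i' - B k y') by rewrite subnKC.
move: hi hy; rewrite {1 2}e step_size step_nth_stay => hi hy.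
have hS : nth set0 (Ls p A B w k y') (i' - B k y' + A k y') \in Ls p A B w k y'.
  apply: mem_nth; move: hi; case: (A k y') => /=; rewrite ?addn0 ?addn1 ?subn0 //; lia.
split=> //; split.
  move: hi; case: (A k y') => /=; rewrite ?addn0 ?addn1 ?subn0 //; lia.

rewrite {1}hy Wd_stay //.
apply: (L_fresh hS); rewrite inordK //; exact: leq_trans hk _.
Qed.

Lemma L_bij (G : dgroup) p (A B : nat -> G -> bool) (w : nat -> G)
  (HAB : forall k x, A k x -> B k (gmul (w k) x))
  (HBA : forall k y, B k y -> A k (gmul (ginv (w k)) y))
  (Hm1 : forall k, k <= p -> forall y, A k y -> (1 <= mass A B k y)%R) :
  forall k, k <= p.+1 ->
  (forall x, exists y i, i < size (Ls p A B w k y) /\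
        y = gmul (Wd w k (nth set0 (Ls p A B w k y) i)) x) /\
  (forall x y1 i1 y2 i2, i1 < size (Ls p A B w k y1) -> i2 < size (Ls p A B w k y2) ->
     y1 = gmul (Wd w k (nth set0 (Ls p A B w k y1) i1)) x ->
     y2 = gmul (Wd w k (nth set0 (Ls p A B w k y2) i2)) x -> y1 = y2 /\ i1 = i2).
Proof.
elim=> [|k IH] hk.
  split; first by move=> x; exists x, 0; split=> //; rewrite /= gmul1.
  by move=> x y1 [|i1] y2 [|i2] //= _ _; rewrite !gmul1 => -> ->.
have hkp : k <= p by [].
have [IHs IHi] := IH (ltnW hk).
split.
  move=> x; have [y [i [hi hy]]] := IHs x.
  case hA: (A k y && (i == 0)).
    move/andP: hA => [hA /eqP i0]; subst i.
    exists (gmul (w k) y), 0; split.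
      by rewrite step_size HAB.
    rewrite step_nth_move ?HAB // gKl Wd_move // -gmulA -hy //.
  exists y, (B k y + (i - A k y)); split.
    rewrite step_size ltn_add2l; move: hA hi; case: (A k y) => /=; rewrite ?subn0 //.
    move=> /eqP ? ?; lia.
  rewrite step_nth_stay.
  have -> : i - A k y + A k y = i by move: hA; case: (A k y) => //= /eqP ?; lia.
  rewrite Wd_stay //; apply: (L_fresh (mem_nth set0 hi)); rewrite inordK //.
move=> x y1 i1 y2 i2 h1 h2 r1 r2.
have b1 := L_back HBA Hm1 hkp h1 r1.
have b2 := L_back HBA Hm1 hkp h2 r2.
move: b1 b2.
case e1: (B k y1 && (i1 == 0)); case e2: (B k y2 && (i2 == 0)) => /=.
- move=> [s1 q1] [s2 q2]; have [ey _] := IHi _ _ _ _ _ s1 s2 q1 q2.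
  move/andP: e1 => [_ /eqP ->]; move/andP: e2 => [_ /eqP ->].
  by split=> //; apply: (ginj ey).
- move=> [s1 q1] [b2 [s2 q2]]; have [ey ei] := IHi _ _ _ _ _ s1 s2 q1 q2.
  move/andP: e1 => [eB _].
  have := HBA _ _ eB; rewrite ey => hA2; move: ei; rewrite hA2 addn1 //.
- move=> [b1 [s1 q1]] [s2 q2]; have [ey ei] := IHi _ _ _ _ _ s1 s2 q1 q2.
  move/andP: e2 => [eB _].
  have := HBA _ _ eB; rewrite -ey => hA1; move: ei; rewrite hA1 addn1 //.
- move=> [b1 [s1 q1]] [b2 [s2 q2]]; have [ey ei] := IHi _ _ _ _ _ s1 s2 q1 q2.
  subst y2; split=> //; move: ei b1 b2; lia.
Qed.

Lemma card_Vset p : #|[set S : {set 'I_p.+1} | ord_max \notin S]| <= 2 ^ p.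
Proof.
set V := [set S : {set 'I_p.+1} | ord_max \notin S].
have hT : #|{set 'I_p.+1}| = 2 ^ p.+1.
  by rewrite -cardsT -powersetT card_powerset cardsT card_ord.
have hinj : {in V &, injective (fun S : {set 'I_p.+1} => ord_max |: S)}.
  move=> S1 S2; rewrite !inE => h1 h2 e.
  by rewrite -(setU1K h1) -(setU1K h2) e.
have hsub : [set ord_max |: S | S in V] \subset ~: V.
  apply/subsetP=> T /imsetP [S _ ->]; by rewrite inE inE negbK setU11.
have := subset_leq_card hsub; rewrite card_in_imset //.
have := cardsC V; rewrite hT expnS => X Y. by rewrite -(leq_pmul2l (isT : 0 < 2)) -X mul2n -addnn leq_add2l.
Qed.

Lemma core (G : dgroup) p (A B : nat -> G -> bool) (w : nat -> G)
  (HAB : forall k x, A k x -> B k (gmul (w k) x))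
  (HBA : forall k y, B k y -> A k (gmul (ginv (w k)) y))
  (Hm1 : forall k, k <= p -> forall y, A k y -> (1 <= mass A B k y)%R)
  (Hm2 : forall y, mass A B p.+1 y = 2%R) :
  tarski_le G (2 ^ p.+1 + 2 ^ p).
Proof.
pose L := Ls p A B w p.+1.
pose W := @Wd G p w p.+1.
have hsz : forall y, size (L y) = 2.
  move=> y; have := @L_size G p A B w Hm1 p.+1 (leqnn _) y; rewrite Hm2.
  by case.
have [Hs Hi] := L_bij HAB HBA Hm1 (leqnn p.+1).
have pos : forall x, {yi : G * nat | yi.2 < size (L yi.1) /\
                    yi.1 = gmul (W (nth set0 (L yi.1) yi.2)) x}.
  move=> x; apply: constructive_indefinite_description.
  have [y [i [h1 h2]]] := Hs x; by exists (y, i).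
pose V := [set S : {set 'I_p.+1} | ord_max \notin S].
have h0 : set0 \in V by rewrite inE inE.
have hV : forall y, nth set0 (L y) 1 \in V.
  move=> y.
  have [j ->] : exists j, nth set0 (L y) 1 = nth set0 (Ls p A B w p y) j.
    rewrite /L; case hB: (B p y).
      by exists (0 + A p y); rewrite -step_nth_stay hB.
    by exists (1 + A p y); rewrite -step_nth_stay hB.
  case: (ltnP j (size (Ls p A B w p y))) => hj; last by rewrite nth_default.
  rewrite inE; apply: (L_fresh (mem_nth set0 hj)); by [].
pose posf x := sval (pos x).
pose lab x : 'I_#|{set 'I_p.+1}| + 'I_#|V| :=
  if (posf x).2 == 0 then inl (enum_rank (nth set0 (L (posf x).1) 0))
  else inr (enum_rank_in h0 (nth set0 (L (posf x).1) 1)).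
pose a (i : 'I_#|{set 'I_p.+1}|) := W (enum_val i).
pose b (j : 'I_#|V|) := W (enum_val j).
exists #|{set 'I_p.+1}|, #|V|, lab, a, b.
have posE : forall x y i, i < 2 -> y = gmul (W (nth set0 (L y) i)) x -> posf x = (y, i).
  move=> x y i hi hy; rewrite /posf; case: (pos x) => [[y' i']] /= [h1 h2].
  have hi' : i < size (L y) by rewrite hsz.
  have [e1 e2] := Hi x y' i' y i h1 hi' h2 hy.
  by rewrite e1 e2.
have posS : forall x, (posf x).2 < 2 /\ (posf x).1 = gmul (W (nth set0 (L (posf x).1) (posf x).2)) x.
  move=> x; rewrite /posf; case: (pos x) => [[y' i']] /= [h1 h2]; by rewrite -(hsz y').
split.
  move=> y; exists (enum_rank (nth set0 (L y) 0)); split.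
    exists (gmul (ginv (W (nth set0 (L y) 0))) y).
    rewrite /lab (posE _ y 0) //= ?gKr //; split=> //.
    by rewrite /a enum_rankK gKr.
  move=> i [x [hl ha]]; move: hl; rewrite /lab.
  have [p2 p1] := posS x.
  case: eqP => // e [ei]; subst i; move: ha; rewrite /a enum_rankK -e -p1 => ->.
  done.
split.
  move=> y; exists (enum_rank_in h0 (nth set0 (L y) 1)); split.
    exists (gmul (ginv (W (nth set0 (L y) 1))) y).
    rewrite /lab (posE _ y 1) //= ?gKr //; split=> //.
    by rewrite /b enum_rankK_in ?gKr.
  move=> j [x [hl hb]]; move: hl; rewrite /lab.
  have [p2 p1] := posS x.
  case: eqP => // e [ej]; subst j; move: hb; rewrite /b enum_rankK_in //.
  have e1 : (posf x).2 = 1 by move: p2 e; lia.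
  by move: p1; rewrite e1 => p1; rewrite -p1 => ->.
have hT : #|{set 'I_p.+1}| = 2 ^ p.+1.
  by rewrite -cardsT -powersetT card_powerset cardsT card_ord.
by rewrite hT leq_add2l card_Vset.
Qed.

Lemma sum_natz (l : nat) (b : 'I_l -> bool) :
  (\sum_(c < l) Posz (b c : nat))%R = Posz #|b|.
Proof.
under eq_bigr do rewrite -natz.
rewrite -natr_sum natz -sum1_card; congr Posz.
rewrite [RHS]big_mkcond /=; apply: eq_bigr => c _; by rewrite unfold_in; case: (b c).
Qed.

Lemma sum_bound l (a b : 'I_l -> bool) : (exists c, a c) -> ((forall c, b c) -> forall c, a c) ->
  (\sum_(c < l) (Posz (b c : nat) - Posz (a c : nat)) = 0 \/
   \sum_(c < l) (Posz (b c : nat) - Posz (a c : nat)) <= Posz l - 2)%R.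
Proof.
move=> [c1 hc1] hab.
case: (boolP [forall c, b c]) => [/forallP hb | /forallPn [c0 hc0]].
  by left; apply: big1 => c _; rewrite hb hab // subrr.
right; rewrite sumrB !sum_natz.
have h1 := cardC b; rewrite card_ord in h1.
have h2 : 0 < #|[predC b]| by apply/card_gt0P; exists c0.
have h3 : 0 < #|a| by apply/card_gt0P; exists c1.
set x := #|b|; set y := #|a|.
have h1' : x + #|[predC b]| = l := h1.
have h3' : 0 < y := h3.
lia.
Qed.


Definition gg (G : dgroup) n (g : 'I_n -> G) (j : 'I_n.+1) : G :=
  if unlift ord0 j is Some i then g i else gone G.

Definition cfg (G : dgroup) n m (g : 'I_n -> G) (E : G -> 'I_m) (x : G) : config n m :=
  [ffun j => E (gmul (gg g j) x)].

Lemma cfg_is (G : dgroup) n m (g : 'I_n -> G) (E : G -> 'I_m) x : is_config g E (cfg g E x).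
Proof.
exists x; split; first by rewrite ffunE /gg unlift_none gmul1.
by move=> i; rewrite ffunE /gg liftK.
Qed.

Lemma is_cfg_inv (G : dgroup) n m (g : 'I_n -> G) (E : G -> 'I_m) C :
  is_config g E C -> exists x, C = cfg g E x.
Proof.
move=> [x [h0 h1]]; exists x; apply/ffunP => j; rewrite ffunE /gg.
by case: (unliftP ord0 j) => [i ->|->]; rewrite ?h1 // gmul1.
Qed.

Unset Implicit Arguments.

Theorem corollary3p2 (G : dgroup) (n m : nat) (g : 'I_n -> G) (E : G -> 'I_m)
  (HE : forall i : 'I_m, exists x : G, E x = i)
  (cs : seq (config n m)) (Hcs : enumerates (is_config g E) cs)
  (p : nat) (e : 'I_p -> 'I_m * 'I_n.+1 * 'I_n.+1)
  (Hnormal : normal_system (lhs_mx cs e) (rhs_mx cs e))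
  (Hsum : forall c : 'I_(size cs),
      (\sum_(t < p) (rhs_mx cs e t c - lhs_mx cs e t c))%R = 1%R) :
  tarski_le G ((size cs - 1) * (2 ^ p - 1)).
Proof.
have [Huniq Hmem] := Hcs.
have hin : forall x, cfg g E x \in cs by move=> x; apply/Hmem/cfg_is.
have hidx : forall x, index (cfg g E x) cs < size cs by move=> x; rewrite index_mem.
pose idx x := Ordinal (hidx x).
have htn : forall x, tnth (in_tuple cs) (idx x) = cfg g E x.
  by move=> x; rewrite (tnth_nth (cfg g E x)) /= nth_index.
have hsurj : forall (h : G) y, exists x, gmul h x = y.
  by move=> h y; exists (gmul (ginv h) y); rewrite gKr.
have [hl3 hp2] : 3 <= size cs /\ 2 <= p.
  pose F t := (\sum_(c < size cs) (rhs_mx cs e t c - lhs_mx cs e t c))%R.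
  have hF : forall t, (F t = 0 \/ F t <= Posz (size cs) - 2)%R.
    move=> t.
    pose a c := tnth (in_tuple cs) c (e t).1.2 == (e t).1.1.
    pose b c := tnth (in_tuple cs) c (e t).2 == (e t).1.1.
    have -> : F t = (\sum_(c < size cs) (Posz (b c : nat) - Posz (a c : nat)))%R.
      by apply: eq_bigr => c _; rewrite !mxE.
    apply: sum_bound.
      have [y0 hy0] := HE (e t).1.1.
      have [x hx] := hsurj (gg g (e t).1.2) y0.
      by exists (idx x); rewrite /a htn ffunE hx hy0.
    move=> hb c.
    have hE : forall z, E z = (e t).1.1.
      move=> z; have [x hx] := hsurj (gg g (e t).2) z.
      by have := hb (idx x); rewrite /b htn ffunE hx => /eqP.
    rewrite /a; have := mem_tnth c (in_tuple cs); move/Hmem/is_cfg_inv => [x ->].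
    by rewrite ffunE hE.
  have hsumF : (\sum_(t < p) F t)%R = Posz (size cs).
    rewrite /F exchange_big /= (eq_bigr (fun _ => 1%R)); last by move=> c _; exact: Hsum.
    by rewrite sumr_const card_ord natz.
  have hl1 : 0 < size cs by have := hidx (gone G); lia.
  split.
    rewrite leqNgt; apply/negP => hl2.
    have : (\sum_(t < p) F t <= \sum_(t < p) 0)%R.
      by apply: ler_sum => t _; case: (hF t) => h; rewrite ?h //; lia.
    rewrite big1_eq hsumF; lia.
  rewrite leqNgt; apply/negP => hp.
  have : p = 0 \/ p = 1 by lia.
  case=> ?; subst p; first by move: hsumF; rewrite big_ord0; lia.
  move: hsumF; rewrite big_ord1; case: (hF ord0) => [->|]; lia.
destruct p as [|p']; first by [].
pose Aset t x := E (gmul (gg g (e t).1.2) x) == (e t).1.1.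
pose Bset t x := E (gmul (gg g (e t).2) x) == (e t).1.1.
have hl : forall t x, lhs_mx cs e t (idx x) = Posz (Aset t x).
  by move=> t x; rewrite /lhs_mx mxE htn ffunE.
have hr : forall t x, rhs_mx cs e t (idx x) = Posz (Bset t x).
  by move=> t x; rewrite /rhs_mx mxE htn ffunE.
have [_ [s Hs]] := Hnormal.
pose eqn k := e (s (inord k)).
pose A k y := Aset (s (inord k)) y.
pose B k y := Bset (s (inord k)) y.
pose w k := gmul (ginv (gg g (eqn k).2)) (gg g (eqn k).1.2).
have HAB : forall k x, A k x -> B k (gmul (w k) x).
  move=> k x; rewrite /A /B /Aset /Bset /w -/(eqn k) -gmulA gKr //.
have HBA : forall k y, B k y -> A k (gmul (ginv (w k)) y).
  move=> k y; rewrite /A /B /Aset /Bset -/(eqn k).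
  have -> : gmul (gg g (eqn k).1.2) (gmul (ginv (w k)) y) = gmul (gg g (eqn k).2) y.
    apply: (@ginj _ (ginv (gg g (eqn k).2))); rewrite gKl gmulA -/(w k) gKr //.
  done.
have hD : forall t y, (rhs_mx cs e t (idx y) - lhs_mx cs e t (idx y))%R =
                      (Posz (Bset t y : nat) - Posz (Aset t y : nat))%R.
  by move=> t y; rewrite hl hr.
pose D := (rhs_mx cs e - lhs_mx cs e)%R.
have hmass : forall k y, k <= p'.+1 -> mass A B k y =
    (1 + \sum_(j < p'.+1 | (j < k)%N) D (s j) (idx y))%R.
  move=> k y hk; rewrite /mass big_mkord (big_ord_widen p'.+1 (fun i => (Posz (B i y : nat) - Posz (A i y : nat))%R) hk); congr (_ + _)%R.
  by apply: eq_bigr => j _; rewrite /A /B inord_val -hD /D !mxE.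
have Hm2 : forall y, mass A B p'.+1 y = 2%R.
  move=> y; rewrite hmass //.
  rewrite (eq_bigl (fun _ => true)); last by move=> j; rewrite ltn_ord.
  rewrite -(@reindex_inj _ _ _ _ s xpredT (fun t => D t (idx y)) (@perm_inj _ s)) /=.
  have -> : (\sum_(t < p'.+1) D t (idx y))%R = 1%R.
    by rewrite -(Hsum (idx y)); apply: eq_bigr => t _; rewrite /D !mxE.
  done.
have Hm1 : forall k, k <= p' -> forall y, A k y -> (1 <= mass A B k y)%R.
  move=> [|k0] hk y hA; first by rewrite /mass big_geq.
  have hk0 : k0 < p'.+1 by apply: ltn_trans hk _.
  set c := idx y.
  have hsub : forall (M N : 'M[int]_(p'.+1, size cs)) i j, (M - N)%R i j = (M i j - N i j)%R.
    by move=> M N i j; rewrite !mxE.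
  have h1 : (lowtri p'.+1 *m perm_mx s *m D)%R (inord k0) c =
            (\sum_(j < p'.+1 | (j < k0.+1)%N) D (s j) c)%R.
    rewrite -mulmxA -row_permE mxE [RHS]big_mkcond /=; apply: eq_bigr => j _.
    rewrite !mxE inordK //; case: (leqP j k0) => hj /=; rewrite ?ltnS ?hj ?mul1r ?mul0r //.
    by move: hj; rewrite ltnNge => /negbTE ->.
  have h2 : (perm_plus s *m lhs_mx cs e)%R (inord k0) c = lhs_mx cs e (s (inord k0.+1)) c.
    transitivity ((perm_mx s *m lhs_mx cs e)%R (ordS (inord k0 : 'I_p'.+1)) c).
      by rewrite !mxE; apply: eq_bigr => j _; rewrite mxE.
    rewrite -row_permE mxE; congr (lhs_mx cs e (s _) c); apply: val_inj.
    by rewrite /= inordK // inordK // modn_small.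
  have := Hs (inord k0) c; rewrite hsub h1 h2 /c hl -/(A k0.+1 y) hA hmass; last by apply: leq_trans hk _.
  move=> h; lia.
have := core HAB HBA Hm1 Hm2.
apply: tarski_le_mono.
have hx : 2 <= 2 ^ p' by rewrite -{1}(expn1 2) leq_pexp2l.
rewrite expnS; move: hx hl3; set X := 2 ^ p'; set L := size cs; nia.
Qed.
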